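(* Let $m\geq 3$ be an odd integer and $\ell=\lceil\log_2 m\rceil$. Suppose there is a positive integer $j$ such that $\mathbf t_j\mathbf t_{j+1}=\mathbf t_{m+j}\mathbf t_{m+j+1}$. Then $\mathfrak K(m)<\left(1+\frac{j+1}{m}\right)2^\ell$.
   Context: The Thue–Morse word is $\mathbf t=\mathbf t_1\mathbf t_2\cdots$ where $\mathbf t_i\in\{0,1\}$ has the parity of the number of $1$'s in the binary expansion of $i-1$. For positive integers $\alpha\le\beta$, $\langle\alpha,\beta\rangle=\mathbf t_\alpha\cdots\mathbf t_\beta$. A $k$-anti-power is a word $w_1\cdots w_k$ with $w_1,\dots,w_k$ pairwise distinct words of equal length. For a positive integer $m$, $\mathfrak K(m)$ is the smallest positive integer $k$ such that the prefix $\langle 1,km\rangle$ of $\mathbf t$ is not a $k$-anti-power. *)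

(* Defs.v *)
From mathcomp Require Import all_boot.
Set Implicit Arguments. Unset Strict Implicit. Unset Printing Implicit Defensive.

Fixpoint popcount_aux (fuel n : nat) : nat :=
  match fuel with
  | 0 => 0
  | f.+1 => if n == 0 then 0 else odd n + popcount_aux f n./2
  end.
Definition popcount (n : nat) : nat := popcount_aux n n.

(* Thue-Morse word, 1-indexed: t_i = parity of popcount (i-1) *)
Definition tm (i : nat) : bool := odd (popcount i.-1).

(* factor <a, b> = t_a ... t_b (empty if b < a) *)
Definition factor (a b : nat) : seq bool := [seq tm i | i <- iota a (b.+1 - a)].

(* The prefix <1, k m> splits into k blocks of length m; the i-th block
   (1 <= i <= k) is <(i-1)m+1, i m>. *)
Definition block (m i : nat) : seq bool := factor ((i.-1) * m + 1) (i * m).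

Definition is_anti_power (m k : nat) : bool :=
  [forall i : 'I_k, forall i' : 'I_k,
     (i != i') ==> (block m i.+1 != block m i'.+1)].

(* Main.v *)
Require Import Defs.
From mathcomp Require Import all_boot zify.

Lemma popcount_aux_indep f g n : n <= f -> n <= g -> popcount_aux f n = popcount_aux g n.
Proof.
elim: f g n => [|f IH] g n Hf Hg.
  have -> : n = 0 by lia. by case: g Hg.
case: g Hg => [|g] Hg; first by have -> : n = 0 by lia.
simpl; case: eqP => // Hn0.
have : n./2 < n by rewrite -divn2 ltn_Pdiv //; lia.
move=> h2.
by rewrite (IH g) //; lia.
Qed.

Lemma popcountS n : 0 < n -> popcount n = odd n + popcount n./2.
Proof.
case: n => [//|n] _.
rewrite /popcount /=.
have h2 : n.+1./2 < n.+1 by rewrite -divn2 ltn_Pdiv //.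
by rewrite (@popcount_aux_indep n (n.+1./2) (n.+1./2)) //; lia.
Qed.

Lemma popcount_double x (b : bool) : popcount (x.*2 + b) = popcount x + (b : nat).
Proof.
case: b => /=.
  rewrite popcountS; last by rewrite addnC.
  rewrite oddD odd_double /= addn1 -[(x.*2).+1./2]/(uphalf x.*2) uphalf_double; lia.
rewrite addn0; case: (posnP x) => [->//|H].
rewrite popcountS; last by rewrite double_gt0.
by rewrite odd_double doubleK addn0.
Qed.

Lemma popcount_split l q r : r < 2 ^ l -> popcount (q * 2 ^ l + r) = popcount q + popcount r.
Proof.
elim: l r => [|l IH] r Hr.
  have -> : r = 0 by rewrite expn0 in Hr; lia. by rewrite expn0 muln1 !addn0.
have Hr' : r./2 < 2 ^ l by rewrite -divn2 ltn_divLR // -expnSr.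
have e1 : r = (r./2).*2 + odd r by rewrite addnC odd_double_half.
have e2 : q * 2 ^ l.+1 + r = (q * 2 ^ l + r./2).*2 + odd r.
  rewrite [in LHS]e1 expnS -!muln2; lia.
rewrite e2 popcount_double IH // [in RHS]e1 popcount_double; lia.
Qed.

Definition TT n := odd (popcount n).

Lemma TT_split l q r : r < 2 ^ l -> TT (q * 2 ^ l + r) = TT q (+) TT r.
Proof. by move=> H; rewrite /TT popcount_split // oddD. Qed.

Lemma block_map m i : 0 < i ->
  block m i = [seq TT (((i.-1) * m) + t) | t <- iota 0 m].
Proof.
move=> Hi; rewrite /block /factor.
have -> : (i * m).+1 - (i.-1 * m + 1) = m.
  case: i Hi => // i _ /=; rewrite mulSn; lia.
rewrite -[i.-1 * m + 1]addn0 -addnA iotaDl -map_comp.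
rewrite iotaDl -map_comp; apply/eq_in_map => t _ /=; rewrite /tm; by rewrite addnCA add1n.
Qed.

(* K(m) < (1 + (j+1)/m) 2^l  <=>  K(m) * m < (m + j + 1) * 2^l, l = up_log 2 m *)
Theorem lemma4 (m j : nat) :
  3 <= m -> odd m -> 0 < j ->
  [:: tm j; tm j.+1] = [:: tm (m + j); tm (m + j).+1] ->
  exists k, [/\ 0 < k, ~~ is_anti_power m k &
             k * m < (m + j + 1) * 2 ^ up_log 2 m].
Proof.
move=> Hm Hodd Hj [E1 E2].
set l := up_log 2 m.
set L := 2 ^ l.
have HmL : m < L.
  have H1 : m <= L by apply: up_logP.
  have H2 : 0 < l by rewrite up_log_gt0; lia.
  rewrite ltn_neqAle H1 andbT; apply/eqP => Heq.
  move: Hodd; rewrite Heq /L; case: (l) H2 => // l' _.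
  by rewrite expnS oddM.
set q := j.-1.
have Eq1 : TT q = TT (q + m).
  by move: E1; rewrite /tm /TT /q; have -> : (m + j).-1 = j.-1 + m by lia.
have Eq2 : TT (q + 1) = TT (q + 1 + m).
  by rewrite /TT /q addn1 prednK // addnC; move: E2; rewrite /tm /=.
set n := (q * L + m.-1) %/ m.
have Hd := divn_eq (q * L + m.-1) m.
have Hmod : (q * L + m.-1) %% m < m by rewrite ltn_mod; lia.
have Hp1 : q * L <= n * m by rewrite /n; lia.
have Hp2 : n * m < q * L + m by rewrite /n; lia.
have key : forall t, t < m -> TT (n * m + t) = TT ((n + L) * m + t).
  move=> t Ht.
  case: (ltnP (n * m - q * L + t) L) => Hs.
    have -> : n * m + t = q * L + (n * m - q * L + t) by lia.
    have -> : (n + L) * m + t = (q + m) * L + (n * m - q * L + t).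
      rewrite !mulnDl (mulnC L m); lia.
    by rewrite !TT_split // Eq1.
  have -> : n * m + t = (q + 1) * L + (n * m - q * L + t - L).
    rewrite mulnDl; lia.
  have -> : (n + L) * m + t = (q + 1 + m) * L + (n * m - q * L + t - L).
    rewrite !mulnDl (mulnC L m); lia.
  by rewrite !TT_split ?Eq2 //; lia.
have Hblk : block m n.+1 = block m (n + L).+1.
  rewrite !block_map // -!pred_Sn.
  by apply/eq_in_map => t; rewrite mem_iota => /andP [_ Ht]; apply: key.
exists (n + L).+1; split => //.
  apply/negP => /forallP /(_ (Ordinal (ltnSn (n + L)) : 'I_(n + L).+1)).
  have Hn : n < (n + L).+1 by lia.
  move=> /forallP /(_ (Ordinal Hn)) /implyP H.
  have Hne : (Ordinal (ltnSn (n + L)) : 'I_(n + L).+1) != Ordinal Hn.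
    apply/eqP => /(congr1 val) /=; lia.
  by move: (H Hne); rewrite /= Hblk eqxx.
rewrite -/L.
have -> : m + j + 1 = m + q + 2 by rewrite /q; lia.
rewrite mulSn !mulnDl (mulnC L m) mulnC; move: Hp2 HmL; generalize (n * m) (m * L) (q * L) L m => a b c d e; lia.
Qed.
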